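(* **Part (a).** Let $R\in\mathfrak{D}'\subseteq\mathfrak{D}$ with $\mathfrak{G}_{\mathfrak{D}'}(R)\subseteq\mathfrak{D}'$, where $$\mathfrak{G}_{\mathfrak{D}'}(R)=\{\mathcal{G}(\xi):\xi\in\mathcal{H}(G,R),\ G\in\mathfrak{D}'\}.$$ Then for every $S\in\mathfrak{D}$, the relation $R\sqsubseteq_\Gamma S$ with respect to $\mathfrak{D}'$ holds if and only if for every $\mathfrak{g}\in\mathfrak{G}_{\mathfrak{D}'}(R)$ there exists an injective map $\sigma_{\mathfrak{g}}:\mathcal{S}(\mathfrak{g},R)\to\mathcal{S}(\mathfrak{g},S)$. In this case, a strong $\Gamma$-scheme $\rho$ from $R$ to $S$ with respect to $\mathfrak{D}'$ is given by $$\rho_G(\xi)=\sigma_{\mathcal{G}(\xi)}(\iota_\xi)\circ\pi_\xi\quad\text{for } G\in\mathfrak{D}'_r,\ \xi\in\mathcal{H}(G,R).$$ **Part (b).** Let $\mathfrak{D}'\subseteq\mathfrak{P}$ or $\mathfrak{D}'\subseteq\mathfrak{P}^*$, and let $R\in\mathfrak{D}'$. Put $$\mathfrak{T}_{\mathfrak{D}'}(R)=\{\mathcal{T}(\xi):\xi\in\mathcal{H}(G,R),\ G\in\mathfrak{D}'\},$$ and assume $\mathfrak{T}_{\mathfrak{D}'}(R)\subseteq\mathfrak{D}'$. Then for every $S\in\mathfrak{D}$, $R\sqsubseteq_\Gamma S$ with respect to $\mathfrak{D}'$ holds if and only if for every $\mathfrak{t}\in\mathfrak{T}_{\mathfrak{D}'}(R)$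 there exists an injective map $\sigma_{\mathfrak{t}}:\mathcal{S}(\mathfrak{t},R)\to\mathcal{S}(\mathfrak{t},S)$. In this case, $\rho_G(\xi)=\sigma_{\mathcal{T}(\xi)}(\iota_\xi)\circ\pi_\xi$ defines a strong $\Gamma$-scheme from $R$ to $S$ with respect to $\mathfrak{D}'$. Here $\iota_\xi$ is regarded as a map on $V(\mathcal{T}(\xi))=V(\mathcal{G}(\xi))$.
   Context: **Digraphs and homomorphisms.** - A digraph $G$ is a pair $(V(G),A(G))$, where $V(G)$ is a finite non-empty set and $A(G)\subseteq V(G)\times V(G)$. Arcs are written $vw$. - An arc $vv$ is a loop. An arc $vw$ with $v\ne w$ is proper. $G^*$ is $G$ with all loops removed. - A homomorphism $\xi:G\to H$ is a map $V(G)\to V(H)$ with $\xi(v)\xi(w)\in A(H)$ for all $vw\in A(G)$. $\mathcal{H}(G,H)$ is the set of homomorphisms. - A homomorphism is strict if it maps every proper arc to a proper arc. $\mathcal{S}(G,H)$ is the set of strict homomorphisms. - The transitive hull of a digraph $G$ is the digraph on $V(G)$ whose arc set is the smallest transitive relation containing $A(G)$. **Classes of digraphs.** - $\mathfrak{D}$ is the class of all digraphs. - $\mathfrak{P}$ is the class of finite posets, i.e. reflexive, antisymmetric, transitive digraphs. - $\mathfrak{P}^*=\{P^*:P\in\mathfrak{P}\}$. **Connectivity.** - Two vertices $u,w$ are adjacent if $uw\in A(G)$ or $wu\in A(G)$. - For $X\subseteq V(G)$ and $v,w\in X$, the vertices $v$ and $w$ are connected in $X$ if $v=w$, or if there are $z_0=v,\dots,z_I=w$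 in $X$ with consecutive terms adjacent. - $\gamma_X(v)$ is the set of $w\in X$ connected to $v$ in $X$. - $\Gamma_\xi(v):=\gamma_{\xi^{-1}(\xi(v))}(v)$. **The quotient digraph.** For $\xi\in\mathcal{H}(G,H)$: - $\mathcal{G}(\xi)$ is the digraph with vertex set $\{\Gamma_\xi(v):v\in V(G)\}$, and $\mathfrak{a}\mathfrak{b}$ is an arc iff there are $a\in\mathfrak{a}$, $b\in\mathfrak{b}$ with $ab\in A(G)$. - $\mathcal{T}(\xi)$ is the transitive hull of $\mathcal{G}(\xi)$. - $\pi_\xi$ is the map $v\mapsto\Gamma_\xi(v)$. - $\iota_\xi$ is the map $\Gamma_\xi(v)\mapsto\xi(v)$. **Schemes.** - $\mathfrak{D}'_r$ is a fixed system of representatives of $\mathfrak{D}'$ up to isomorphism. - A Hom-scheme from $R$ to $S$ with respect to $\mathfrak{D}'$ is a family of maps $\rho_G:\mathcal{H}(G,R)\to\mathcal{H}(G,S)$, $G\in\mathfrak{D}'_r$. - It is strong if all $\rho_G$ are injective. - It is a $\Gamma$-scheme if $\Gamma_{\rho_G(\xi)}(v)=\Gamma_\xi(v)$ for all $G$, $\xi$ and $v$. - $R\sqsubseteq_\Gamma S$ with respect to $\mathfrak{D}'$ means that a strong $\Gamma$-scheme exists. *)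

(* Defs.v *)
From mathcomp Require Import all_boot.
Set Implicit Arguments. Unset Strict Implicit. Unset Printing Implicit Defensive.

Record digraph := Digraph {
  vert : finType;
  arc : rel vert;
  vert_nonempty : 0 < #|vert| }.

Definition some_vertex (G : digraph) : vert G :=
  enum_val (Ordinal (vert_nonempty G)).

Definition is_hom (G H : digraph) (xi : {ffun vert G -> vert H}) : bool :=
  [forall v, forall w, arc v w ==> arc (xi v) (xi w)].

Definition is_strict (G H : digraph) (xi : {ffun vert G -> vert H}) : bool :=
  is_hom xi && [forall v, forall w, ((v != w) && arc v w) ==> (xi v != xi w)].

Definition adjacent (G : digraph) (u w : vert G) : bool := arc u w || arc w u.

Definition gamma (G : digraph) (X : {set vert G}) (v : vert G) : {set vert G} :=
  [set w in X | connect (fun a b => [&& a \in X, b \in X & adjacent a b]) v w].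

Definition fiber (G H : digraph) (xi : {ffun vert G -> vert H}) (v : vert G)
  : {set vert G} := [set w | xi w == xi v].

Definition Gam (G H : digraph) (xi : {ffun vert G -> vert H}) (v : vert G)
  : {set vert G} := gamma (fiber xi v) v.

Definition qpred (G H : digraph) (xi : {ffun vert G -> vert H}) : pred {set vert G} :=
  fun A => [exists v, A == Gam xi v].

Definition qvert (G H : digraph) (xi : {ffun vert G -> vert H}) : finType :=
  {A : {set vert G} | qpred xi A}.

Lemma Gam_in_qpred (G H : digraph) (xi : {ffun vert G -> vert H}) (v : vert G) :
  qpred xi (Gam xi v).
Proof. by apply/existsP; exists v. Qed.

Definition qpi (G H : digraph) (xi : {ffun vert G -> vert H}) (v : vert G)
  : qvert xi := exist _ (Gam xi v) (Gam_in_qpred xi v).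

Lemma qvert_nonempty (G H : digraph) (xi : {ffun vert G -> vert H}) :
  0 < #|qvert xi|.
Proof. by apply/card_gt0P; exists (qpi xi (some_vertex G)). Qed.

Definition qarc (G H : digraph) (xi : {ffun vert G -> vert H}) : rel (qvert xi) :=
  fun A B => [exists a in val A, exists b in val B, arc a b].

Definition quot (G H : digraph) (xi : {ffun vert G -> vert H}) : digraph :=
  @Digraph (qvert xi) (@qarc G H xi) (qvert_nonempty xi).

Definition trans_hull_rel (T : finType) (e : rel T) : rel T :=
  fun a b => [exists z, e a z && connect e z b].

Definition tquot (G H : digraph) (xi : {ffun vert G -> vert H}) : digraph :=
  @Digraph (qvert xi) (trans_hull_rel (@qarc G H xi)) (qvert_nonempty xi).

(** iota_xi : Gamma_xi(v) |-> xi(v) (well defined; we evaluate xi at some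
    element of the class). *)
Definition qiota (G H : digraph) (xi : {ffun vert G -> vert H})
  : {ffun vert (quot xi) -> vert H} :=
  [ffun A : qvert xi => xi (odflt (some_vertex G) [pick a in val A])].

Definition iso (G H : digraph) : Prop :=
  exists f : vert G -> vert H, bijective f /\ forall v w, arc (f v) (f w) = arc v w.

Definition rep_system (D' Dr : digraph -> Prop) : Prop :=
  (forall G, Dr G -> D' G) /\
  (forall G, D' G -> exists H, Dr H /\ iso G H) /\
  (forall H1 H2, Dr H1 -> Dr H2 -> iso H1 H2 -> H1 = H2).

(** A map H(G,R) -> H(G,S) is modelled as a
    function on finite functions mapping homomorphisms to homomorphisms. *)
Definition strong_Gamma_scheme (Dr : digraph -> Prop) (R S : digraph)
  (rho : forall G : digraph, {ffun vert G -> vert R} -> {ffun vert G -> vert S})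
  : Prop :=
  forall G, Dr G ->
    (forall xi, is_hom xi -> is_hom (rho G xi)) /\
    {in [pred xi | is_hom xi] &, injective (rho G)} /\
    (forall xi, is_hom xi -> forall v, Gam (rho G xi) v = Gam xi v).

Arguments strong_Gamma_scheme : clear implicits.

Definition Gamma_below (Dr : digraph -> Prop) (R S : digraph) : Prop :=
  exists rho, strong_Gamma_scheme Dr R S rho.

Definition strict_inj (g R S : digraph)
  (sigma : {ffun vert g -> vert R} -> {ffun vert g -> vert S}) : Prop :=
  (forall f, is_strict f -> is_strict (sigma f)) /\
  {in [pred f | is_strict f] &, injective sigma}.

Definition Gclass (D' : digraph -> Prop) (R g : digraph) : Prop :=
  exists (G : digraph) (xi : {ffun vert G -> vert R}), D' G /\ is_hom xi /\ g = quot xi.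

Definition Tclass (D' : digraph -> Prop) (R t : digraph) : Prop :=
  exists (G : digraph) (xi : {ffun vert G -> vert R}), D' G /\ is_hom xi /\ t = tquot xi.

Definition is_poset (G : digraph) : Prop :=
  reflexive (@arc G) /\ antisymmetric (@arc G) /\ transitive (@arc G).

Definition remove_loops (G : digraph) : digraph :=
  @Digraph (vert G) (fun a b => (a != b) && arc a b) (vert_nonempty G).

Definition in_P (G : digraph) : Prop := is_poset G.
Definition in_Pstar (G : digraph) : Prop := exists P, is_poset P /\ G = remove_loops P.

(* Main.v *)
Require Import Defs.
From mathcomp Require Import all_boot.
Require Import Defs.
From Stdlib Require Import FunctionalExtensionality Classical IndefiniteDescription.
Set Implicit Arguments. Unset Strict Implicit. Unset Printing Implicit Defensive.

Lemma hom_arc (G H : digraph) (f : {ffun vert G -> vert H}) a b :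
  is_hom f -> arc a b -> arc (f a) (f b).
Proof. by move=> /forallP/(_ a)/forallP/(_ b)/implyP. Qed.

Lemma strictP (G H : digraph) (f : {ffun vert G -> vert H}) :
  is_strict f -> forall a b, a != b -> arc a b -> f a != f b.
Proof. move=> /andP[_ /forallP h] a b ab e; have := h a; move=> /forallP/(_ b)/implyP; apply; by rewrite ab e. Qed.

Lemma strictI (G H : digraph) (f : {ffun vert G -> vert H}) :
  is_hom f -> (forall a b, a != b -> arc a b -> f a != f b) -> is_strict f.
Proof.
move=> hf h; rewrite /is_strict hf /=; apply/forallP=> a; apply/forallP=> b.
by apply/implyP=> /andP[ab e]; apply: h.
Qed.

Lemma homI (G H : digraph) (f : {ffun vert G -> vert H}) :
  (forall a b, arc a b -> arc (f a) (f b)) -> is_hom f.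
Proof. by move=> h; apply/forallP=> a; apply/forallP=> b; apply/implyP; apply: h. Qed.

Section Basic.
Variables (G H : digraph) (xi : {ffun vert G -> vert H}).

Definition erel (X : {set vert G}) : rel (vert G) :=
  fun a b => [&& a \in X, b \in X & adjacent a b].

Lemma erel_sym X : symmetric (erel X).
Proof. by move=> a b; rewrite /erel /adjacent andbCA orbC. Qed.

Lemma Gam_self v : v \in Gam xi v.
Proof. by rewrite /Gam /gamma inE /fiber inE eqxx connect0. Qed.

Lemma Gam_fib v w : w \in Gam xi v -> xi w = xi v.
Proof. by rewrite /Gam /gamma !inE => /andP[/eqP]. Qed.

Lemma fiber_eq v w : xi w = xi v -> fiber xi w = fiber xi v.
Proof. by move=> e; apply/setP=> u; rewrite !inE e. Qed.

Lemma Gam_eq v w : w \in Gam xi v -> Gam xi w = Gam xi v.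
Proof.
move=> h; have e := Gam_fib h.
rewrite /Gam (fiber_eq e).
move: h; rewrite /Gam /gamma inE => /andP[wX cvw].
have cwv : connect (erel (fiber xi v)) w v by rewrite (sym_connect_sym (@erel_sym _)) cvw.
apply/setP=> u; rewrite !inE; case: (xi u == xi v) => //=.
apply/idP/idP => hu; first exact: connect_trans cvw hu.
exact: connect_trans cwv hu.
Qed.

Lemma adj_Gam a b : adjacent a b -> xi a = xi b -> b \in Gam xi a.
Proof.
move=> ab e; rewrite /Gam /gamma inE /fiber inE e eqxx /=.
by apply: connect1; rewrite /= !inE e eqxx ab.
Qed.

Lemma qpi_fib a b : qpi xi a = qpi xi b -> xi a = xi b.
Proof.
move=> /(congr1 val) /= e; apply: Gam_fib; rewrite -e; exact: Gam_self.
Qed.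

Lemma qpi_in a v : a \in Gam xi v -> qpi xi a = qpi xi v.
Proof. by move=> h; apply: val_inj; rewrite /= (Gam_eq h). Qed.

Lemma qpi_adj a b : adjacent a b -> xi a = xi b -> qpi xi a = qpi xi b.
Proof. by move=> ab e; symmetry; apply: qpi_in; apply: adj_Gam. Qed.

Lemma qpi_surj (A : qvert xi) : exists v, A = qpi xi v.
Proof.
case: A => A hA; have [v /eqP eA] := existsP hA.
by exists v; apply: val_inj.
Qed.

Lemma qiota_pi v : qiota xi (qpi xi v) = xi v.
Proof.
rewrite ffunE /=; case: pickP => [a ha|/(_ v)]; first exact: Gam_fib.
by rewrite Gam_self.
Qed.

Lemma qarc_pi v w : arc v w -> qarc (qpi xi v) (qpi xi w).
Proof.
move=> vw; apply/existsP; exists v; rewrite /= Gam_self /=.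
by apply/existsP; exists w; rewrite Gam_self.
Qed.

Lemma qarcP (A B : qvert xi) : qarc A B ->
  exists a b, [/\ A = qpi xi a, B = qpi xi b & arc a b].
Proof.
have [v ->] := qpi_surj A; have [w ->] := qpi_surj B.
case/existsP=> a /andP[ha /existsP[b /andP[hb ab]]].
by exists a, b; rewrite (qpi_in ha) (qpi_in hb).
Qed.

Lemma qiota_hom : is_hom xi -> @is_hom (quot xi) H (qiota xi).
Proof.
move=> hx; apply: homI => A B /qarcP[a [b [-> -> ab]]].
by rewrite !qiota_pi; apply: hom_arc.
Qed.

Lemma qiota_strict : is_hom xi -> @is_strict (quot xi) H (qiota xi).
Proof.
move=> hx; apply: strictI; first exact: qiota_hom.
move=> A B AB /qarcP[a [b [eA eB ab]]]; move: AB; rewrite eA eB !qiota_pi.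
apply: contra => /eqP e; apply/eqP; apply: qpi_adj => //.
by rewrite /adjacent ab.
Qed.

End Basic.

Lemma Gam_sub (G S1 S2 : digraph) (f : {ffun vert G -> vert S1}) (g : {ffun vert G -> vert S2}) :
  (forall a b, adjacent a b -> (f a == f b) = (g a == g b)) ->
  forall v w, w \in Gam f v -> w \in Gam g v.
Proof.
move=> hfg v w.
have lift : forall x p, f x = f v -> g x = g v -> path (erel (fiber f v)) x p ->
   g (last x p) = g v /\ connect (erel (fiber g v)) x (last x p).
  move=> x p; elim: p x => [|y p IH] x fx gx /=; first by split; rewrite ?connect0.
  case/andP=> /and3P[_ yX xy] pth.
  have fy : f y = f v by move: yX; rewrite inE => /eqP.
  have gy : g y = g v by rewrite -gx; apply/eqP; rewrite eq_sym -(hfg _ _ xy) fx fy.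
  have [gl cl] := IH y fy gy pth; split => //.
  apply: connect_trans cl; apply: connect1; by rewrite /erel !inE gx gy !eqxx xy.
rewrite /Gam /gamma !inE => /andP[_ /connectP[p pth ->]].
have [gl cl] := lift v p erefl erefl pth.
by rewrite gl eqxx.
Qed.

Lemma Gam_ext (G S1 S2 : digraph) (f : {ffun vert G -> vert S1}) (g : {ffun vert G -> vert S2}) :
  (forall a b, adjacent a b -> (f a == f b) = (g a == g b)) ->
  forall v, Gam f v = Gam g v.
Proof.
move=> h v; apply/setP=> w; apply/idP/idP; apply: Gam_sub => // a b ab.
by rewrite h.
Qed.

Lemma strict_Gam (G S T : digraph) (f : {ffun vert G -> vert S}) (g : {ffun vert G -> vert T}) :
  is_hom f -> is_strict g -> (forall v, Gam f v = Gam g v) -> is_strict f.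
Proof.
move=> hf sg e; apply: strictI => // a b ne ab; apply/eqP => efab.
have : b \in Gam f a by apply: adj_Gam => //; rewrite /adjacent ab.
rewrite e => /Gam_fib egb.
by move: (strictP sg ne ab); rewrite egb eqxx.
Qed.

Definition QV (G : digraph) (p : vert G -> {set vert G}) : finType :=
  {A : {set vert G} | [exists v, A == p v]}.
Definition Qg (G : digraph) (ar : forall p : vert G -> {set vert G}, rel (QV p))
  p (pf : 0 < #|QV p|) : digraph := @Digraph (QV p) (ar p) pf.

Section Scheme.
Variables (R S : digraph) (Dr : digraph -> Prop).
Variable ar : forall G : digraph, forall p : vert G -> {set vert G}, rel (QV p).
Variable sigma : forall g : digraph, {ffun vert g -> vert R} -> {ffun vert g -> vert S}.
Hypothesis ar_sub : forall G (xi : {ffun vert G -> vert R}) (A B : qvert xi),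
  qarc A B -> @ar G (Gam xi) A B.
Hypothesis io_strict : forall G (xi : {ffun vert G -> vert R}), Dr G -> is_hom xi ->
  @is_strict (Qg (@ar G) (qvert_nonempty xi)) R (qiota xi).
Hypothesis sig_inj : forall G (xi : {ffun vert G -> vert R}), Dr G -> is_hom xi ->
  strict_inj (@sigma (Qg (@ar G) (qvert_nonempty xi))).

Definition rhoQ G (xi : {ffun vert G -> vert R}) : {ffun vert G -> vert S} :=
  [ffun v => @sigma (Qg (@ar G) (qvert_nonempty xi)) (qiota xi) (qpi xi v)].

Lemma transport G (p1 p2 : vert G -> {set vert G}) (E : p1 = p2) pf1 pf2
  (t1 : {ffun vert (Qg (@ar G) (p:=p1) pf1) -> vert R})
  (t2 : {ffun vert (Qg (@ar G) (p:=p2) pf2) -> vert R})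
  (pi1 : vert G -> QV p1) (pi2 : vert G -> QV p2)
  (h1 : forall v, val (pi1 v) = p1 v) (h2 : forall v, val (pi2 v) = p2 v) :
  {in [pred f | @is_strict (Qg (@ar G) pf1) R f] &, injective (@sigma (Qg (@ar G) pf1))} ->
  @is_strict (Qg (@ar G) pf1) R t1 -> @is_strict (Qg (@ar G) pf2) R t2 ->
  (forall v, @sigma (Qg (@ar G) pf1) t1 (pi1 v) = @sigma (Qg (@ar G) pf2) t2 (pi2 v)) ->
  forall v, t1 (pi1 v) = t2 (pi2 v).
Proof.
subst p2; have epf : pf2 = pf1 := bool_irrelevance _ _; subst pf2.
move=> inj s1 s2 H.
have epi : forall v, pi2 v = pi1 v by move=> v; apply: val_inj; rewrite h1 h2.
have e : @sigma (Qg (@ar G) pf1) t1 = @sigma (Qg (@ar G) pf1) t2.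
  apply/ffunP => A; case: A => A hA; have [v /eqP eA] := existsP hA.
  have -> : exist _ A hA = pi1 v by apply: val_inj; rewrite /= h1.
  by rewrite H epi.
have et : t1 = t2 by apply: inj; rewrite ?inE.
by move=> v; rewrite et epi.
Qed.

Lemma rhoQ_scheme : strong_Gamma_scheme Dr R S rhoQ.
Proof.
move=> G DG.
have tstrict : forall xi : {ffun vert G -> vert R}, is_hom xi ->
    @is_strict (Qg (@ar G) (qvert_nonempty xi)) S
      (@sigma (Qg (@ar G) (qvert_nonempty xi)) (qiota xi)).
  by move=> xi hx; apply: (sig_inj DG hx).1; apply: io_strict.
have hom : forall xi : {ffun vert G -> vert R}, is_hom xi -> is_hom (rhoQ xi).
  move=> xi hx; apply: homI => v w vw; rewrite !ffunE.
  apply: hom_arc; first exact: (andP (tstrict xi hx)).1.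
  by apply: ar_sub; apply: qarc_pi.
have gam : forall xi : {ffun vert G -> vert R}, is_hom xi -> forall v, Gam (rhoQ xi) v = Gam xi v.
  move=> xi hx; apply: Gam_ext => a b ab; rewrite !ffunE.
  case: (xi a =P xi b) => e; first by rewrite (qpi_adj ab e) eqxx.
  have ne : qpi xi a != qpi xi b by apply/eqP => /qpi_fib.
  case/orP: ab => ab.
    by apply/negbTE; apply: (strictP (tstrict xi hx)) ne _; apply: ar_sub; apply: qarc_pi.
  rewrite eq_sym; apply/negbTE; apply: (strictP (tstrict xi hx)); first by rewrite eq_sym.
  by apply: ar_sub; apply: qarc_pi.
split; [exact: hom | split; last exact: gam].
move=> xi1 xi2; rewrite !inE => h1 h2 e.
have eG : Gam xi1 = Gam xi2.
  apply: functional_extensionality_dep => v.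
  by rewrite -gam // e gam.
have H : forall v, @sigma (Qg (@ar G) (qvert_nonempty xi1)) (qiota xi1) (qpi xi1 v)
   = @sigma (Qg (@ar G) (qvert_nonempty xi2)) (qiota xi2) (qpi xi2 v).
  by move=> v; move/ffunP: e => /(_ v); rewrite !ffunE.
have := @transport G (Gam xi1) (Gam xi2) eG (qvert_nonempty xi1) (qvert_nonempty xi2)
  (qiota xi1) (qiota xi2) (qpi xi1) (qpi xi2) (fun _ => erefl) (fun _ => erefl)
  (sig_inj DG h1).2 (io_strict DG h1) (io_strict DG h2) H.
move=> T; apply/ffunP => v; have := T v; by rewrite !qiota_pi.
Qed.

End Scheme.

Lemma below_sigma (D' Dr : digraph -> Prop) (R S : digraph) :
  rep_system D' Dr -> Gamma_below Dr R S -> forall g, D' g ->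
  exists sigma : {ffun vert g -> vert R} -> {ffun vert g -> vert S}, strict_inj sigma.
Proof.
case=> _ [hrep _] [rho hrho] g Dg.
have [H [DrH [phi [[psi phK psK] harc]]]] := hrep g Dg.
have [hhom [hinj hgam]] := hrho H DrH.
pose pull (f : {ffun vert g -> vert R}) : {ffun vert H -> vert R} := [ffun h => f (psi h)].
have pull_strict : forall f, is_strict f -> is_strict (pull f).
  move=> f sf; apply: strictI.
    apply: homI => a b ab; rewrite !ffunE; apply: hom_arc; first exact: (andP sf).1.
    by rewrite -harc !psK.
  move=> a b ne ab; rewrite !ffunE; apply: (strictP sf).
    by apply: contra ne => /eqP e; rewrite -[a]psK -[b]psK e.
  by rewrite -harc !psK.
have rho_strict : forall f, is_strict f -> is_strict (rho H (pull f)).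
  move=> f sf; have ps := pull_strict f sf.
  exact: (strict_Gam (hhom _ (andP ps).1) ps (hgam _ (andP ps).1)).
exists (fun f => [ffun v => rho H (pull f) (phi v)]); split.
  move=> f sf; have st := rho_strict f sf; apply: strictI.
    by apply: homI => a b ab; rewrite !ffunE; apply: hom_arc; [exact: (andP st).1 | rewrite harc].
  move=> a b ne ab; rewrite !ffunE; apply: (strictP st); last by rewrite harc.
  by rewrite (inj_eq (can_inj phK)).
move=> f1 f2; rewrite !inE => s1 s2 e.
have e' : rho H (pull f1) = rho H (pull f2).
  by apply/ffunP=> h; move/ffunP: e => /(_ (psi h)); rewrite !ffunE psK.
have ep : pull f1 = pull f2.
  by apply: hinj; rewrite ?inE; [exact: (andP (pull_strict _ s1)).1 | exact: (andP (pull_strict _ s2)).1 |].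
by apply/ffunP => v; move/ffunP: ep => /(_ (phi v)); rewrite !ffunE phK.
Qed.

Lemma choose_sigma (R S : digraph) (P : digraph -> Prop) :
  (forall g, P g -> exists s : {ffun vert g -> vert R} -> {ffun vert g -> vert S}, strict_inj s) ->
  exists sigma : forall g : digraph, {ffun vert g -> vert R} -> {ffun vert g -> vert S},
    forall g, P g -> strict_inj (sigma g).
Proof.
move=> h.
have h' : forall g, exists s : {ffun vert g -> vert R} -> {ffun vert g -> vert S}, P g -> strict_inj s.
  move=> g; case: (classic (P g)) => [Pg|nPg].
    by have [s hs] := h g Pg; exists s.
  by exists (fun _ => [ffun _ => some_vertex S]).
exists (fun g => proj1_sig (constructive_indefinite_description _ (h' g))).
by move=> g; apply: (proj2_sig (constructive_indefinite_description _ (h' g))).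
Qed.

Lemma tq_strict (R : digraph) (hR : in_P R \/ in_Pstar R) G (xi : {ffun vert G -> vert R}) :
  is_hom xi -> @is_strict (tquot xi) R (qiota xi).
Proof.
move=> hx; have qs := qiota_strict hx; have qh := qiota_hom hx.
case: hR => [[refl [anti tr]] | [P [[refl [anti tr]] eR]]].
  have conn : forall x y, connect (@qarc G R xi) x y -> arc (qiota xi x) (qiota xi y).
    move=> x y /connectP[p pth ->]; elim: p x pth => [|z p IH] x /=; first by rewrite refl.
    case/andP=> xz pth; apply: tr (IH _ pth).
    exact: (@hom_arc (quot xi) R (qiota xi) x z qh xz).
  have step : forall x y, @qarc G R xi x y -> arc (qiota xi y) (qiota xi x) -> x = y.
    move=> x y xy yx; have axy := @hom_arc (quot xi) R (qiota xi) x y qh xy.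
    have e : qiota xi x = qiota xi y by apply: anti; rewrite axy yx.
    case: (x =P y) => // /eqP ne; move: (@strictP (quot xi) R _ qs x y ne xy).
    by rewrite e eqxx.
  have collapse : forall x p, path (@qarc G R xi) x p ->
      qiota xi (last x p) = qiota xi x -> last x p = x.
    move=> x p; elim: p x => [|y p IH] x //= /andP[xy pth] el.
    have cyl : connect (@qarc G R xi) y (last y p) by apply/connectP; exists p.
    have exy : x = y by apply: step => //; rewrite -el; apply: conn.
    by subst y; apply: IH.
  apply: strictI.
    apply: homI => A B /existsP[z /andP[Az zB]].
    by apply: tr (conn _ _ zB); exact: (@hom_arc (quot xi) R (qiota xi) A z qh Az).
  move=> A B ne /existsP[z /andP[Az zB]]; apply/eqP => eAB.
  have eAz : A = z by apply: step => //; rewrite eAB; apply: conn.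
  subst z; move/connectP: zB => [p pth eB].
  have e2 : qiota xi (last A p) = qiota xi A by rewrite -eB eAB.
  by move: ne; rewrite eB (collapse _ _ pth e2) eqxx.
subst R.
have conn : forall x y, connect (@qarc G _ xi) x y -> @arc P (qiota xi x) (qiota xi y).
  move=> x y /connectP[p pth ->]; elim: p x pth => [|z p IH] x /=; first by rewrite refl.
  case/andP=> xz pth; apply: tr (IH _ pth).
  by have := @hom_arc (quot xi) _ (qiota xi) x z qh xz; rewrite /= => /andP[].
have hom : @is_hom (tquot xi) _ (qiota xi).
  apply: homI => A B /existsP[z /andP[Az zB]].
  have := @hom_arc (quot xi) _ (qiota xi) A z qh Az; rewrite /= => /andP[ne az].
  have zb := conn _ _ zB.
  rewrite /= (tr _ _ _ az zb) andbT; apply: contra ne => /eqP e.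
  by apply/eqP; apply: anti; rewrite az e zb.
apply: strictI => // A B _ AB.
by have := @hom_arc (tquot xi) _ (qiota xi) A B hom AB; rewrite /= => /andP[].
Qed.

Definition qa (G : digraph) (p : vert G -> {set vert G}) : rel (QV p) :=
  fun A B => [exists a in (val A : {set vert G}), exists b in (val B : {set vert G}), arc a b].

Theorem proposition2 :
  (* Part (a) *)
  (forall (D' Dr : digraph -> Prop), rep_system D' Dr ->
   forall R : digraph, D' R ->
   (forall g, Gclass D' R g -> D' g) ->
   forall S : digraph,
     (Gamma_below Dr R S <->
        (forall g, Gclass D' R g ->
           exists sigma : {ffun vert g -> vert R} -> {ffun vert g -> vert S},
             strict_inj sigma)) /\
     (forall sigma : forall g : digraph,
          {ffun vert g -> vert R} -> {ffun vert g -> vert S},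
        (forall g, Gclass D' R g -> strict_inj (sigma g)) ->
        strong_Gamma_scheme Dr R S
          (fun G xi => [ffun v => sigma (quot xi) (qiota xi) (qpi xi v)]))) /\
  (* Part (b) *)
  (forall (D' Dr : digraph -> Prop),
   ((forall G, D' G -> in_P G) \/ (forall G, D' G -> in_Pstar G)) ->
   rep_system D' Dr ->
   forall R : digraph, D' R ->
   (forall t, Tclass D' R t -> D' t) ->
   forall S : digraph,
     (Gamma_below Dr R S <->
        (forall t, Tclass D' R t ->
           exists sigma : {ffun vert t -> vert R} -> {ffun vert t -> vert S},
             strict_inj sigma)) /\
     (forall sigma : forall t : digraph,
          {ffun vert t -> vert R} -> {ffun vert t -> vert S},
        (forall t, Tclass D' R t -> strict_inj (sigma t)) ->
        strong_Gamma_scheme Dr R S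
          (fun G xi => [ffun v => sigma (tquot xi) (qiota xi) (qpi xi v)]))).
Proof.
split.
  move=> D' Dr hrep R DR hG S.
  have scheme : forall sigma : forall g : digraph,
          {ffun vert g -> vert R} -> {ffun vert g -> vert S},
        (forall g, Gclass D' R g -> strict_inj (sigma g)) ->
        strong_Gamma_scheme Dr R S
          (fun G xi => [ffun v => sigma (quot xi) (qiota xi) (qpi xi v)]).
    move=> sigma hs.
    apply: (@rhoQ_scheme R S Dr (fun G => @qa G) sigma).
    - by move=> G xi A B h.
    - by move=> G xi _ hx; apply: qiota_strict.
    - move=> G xi DG hx; apply: hs; exists G, xi; split => //.
      by apply: hrep.1.
  split; last exact: scheme.
  split.
    by move=> hb g hg; apply: (below_sigma hrep hb); apply: hG.
  by move=> h; have [sigma hs] := choose_sigma h; exists (fun G xi => [ffun v => sigma (quot xi) (qiota xi) (qpi xi v)]); apply: scheme.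
move=> D' Dr hD hrep R DR hT S.
have hR : in_P R \/ in_Pstar R by case: hD => h; [left | right]; apply: h.
have scheme : forall sigma : forall t : digraph,
        {ffun vert t -> vert R} -> {ffun vert t -> vert S},
      (forall t, Tclass D' R t -> strict_inj (sigma t)) ->
      strong_Gamma_scheme Dr R S
        (fun G xi => [ffun v => sigma (tquot xi) (qiota xi) (qpi xi v)]).
  move=> sigma hs.
  apply: (@rhoQ_scheme R S Dr (fun G p => trans_hull_rel (@qa G p)) sigma).
  - by move=> G xi A B h; apply/existsP; exists B; apply/andP; split; [exact: h | exact: connect0].
  - by move=> G xi _ hx; apply: tq_strict.
  - move=> G xi DG hx; apply: hs; exists G, xi; split => //.
    by apply: hrep.1.
split; last exact: scheme.
split.
  by move=> hb g hg; apply: (below_sigma hrep hb); apply: hT.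
by move=> h; have [sigma hs] := choose_sigma h; exists (fun G xi => [ffun v => sigma (tquot xi) (qiota xi) (qpi xi v)]); apply: scheme.
Qed.
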